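(* Let $n\ge1$ be an integer and $x\in\{0,1,\dots,n\}$ an observed value of $X\sim B(n,p)$. For $\alpha\in(0,1)$ let the prior of $p$ be the triangle distribution with mode $\alpha$, $$\pi(p)=\begin{cases}\frac{2}{\alpha}p, & 0<p\le\alpha,\\ \frac{2}{1-\alpha}(1-p), & \alpha<p<1,\end{cases}$$ and let $g(\alpha)$ be the corresponding posterior mean of $p$: $$g(\alpha)=\frac{\frac{2}{\alpha}\int_0^\alpha p^{x+2}(1-p)^{n-x}\,dp+\frac{2}{1-\alpha}\int_\alpha^1 p^{x+1}(1-p)^{n-x+1}\,dp}{\frac{2}{\alpha}\int_0^\alpha p^{x+1}(1-p)^{n-x}\,dp+\frac{2}{1-\alpha}\int_\alpha^1 p^{x}(1-p)^{n-x+1}\,dp}.$$ Then the iterative limit obtained by replacing the mode $\alpha$ of the prior with the posterior mean on every iteration, namely a point $\tau\in(0,1)$ with $g(\tau)=\tau$, exists and is unique.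
   Context: $B(n,p)$ is the binomial distribution with $n$ trials and success probability $p\in(0,1)$. The iterative limit (iterative Bayes estimate) is by definition a value $\tau\in(0,1)$ at which the prior mode coincides with the posterior mean, i.e. $g(\tau)=\tau$. *)

(* Defs.v *)
From Stdlib Require Import Reals.
From Coquelicot Require Import Coquelicot.
Open Scope R_scope.

(* Posterior mean of p under the triangle prior with mode a, for an observed
   value x of X ~ B(n,p).  (n - x is truncated nat subtraction; the theorem
   assumes x <= n.) *)
Definition post_mean (n x : nat) (a : R) : R :=
  (2 / a * RInt (fun p => p ^ (x + 2) * (1 - p) ^ (n - x)) 0 a
   + 2 / (1 - a) * RInt (fun p => p ^ (x + 1) * (1 - p) ^ (n - x + 1)) a 1)
  /
  (2 / a * RInt (fun p => p ^ (x + 1) * (1 - p) ^ (n - x)) 0 a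
   + 2 / (1 - a) * RInt (fun p => p ^ x * (1 - p) ^ (n - x + 1)) a 1).

(* Main.v *)
Require Import Defs.
From Stdlib Require Import Reals.
From Coquelicot Require Import Coquelicot.
From Stdlib Require Import Reals Lra RealField Ranalysis5.
Open Scope R_scope.
Open Scope R_scope.

Definition Cont (F : R -> R) := forall p, continuous F p.

Lemma exR F a b : Cont F -> ex_RInt F a b.
Proof. intros H; apply (ex_RInt_continuous (V:=R_CompleteNormedModule)); intros; apply H. Qed.

Lemma RInt_extR (F G : R -> R) a b :
  (forall x : R, Rmin a b < x < Rmax a b -> F x = G x) -> RInt F a b = RInt G a b.
Proof. apply RInt_ext. Qed.

Lemma RInt_sub F G a b : Cont F -> Cont G ->
  RInt (fun p => F p - G p) a b = RInt F a b - RInt G a b.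
Proof. intros HF HG. apply (RInt_minus F G a b); apply exR; auto. Qed.

Lemma RInt_mulc F c a b : Cont F -> RInt (fun p => c * F p) a b = c * RInt F a b.
Proof. intros HF. apply (RInt_scal F a b c); apply exR; auto. Qed.

Lemma RInt_divc F c a b : Cont F -> RInt (fun p => F p / c) a b = RInt F a b / c.
Proof. intros HF. unfold Rdiv. rewrite Rmult_comm, <- RInt_mulc by auto.
  apply RInt_extR; intros. ring. Qed.

Lemma Chas F a b c : Cont F -> RInt F a b + RInt F b c = RInt F a c.
Proof. intros HF. apply (RInt_Chasles F a b c); apply exR; auto. Qed.

Lemma RInt_cst a b v : RInt (fun _ => v) a b = (b - a) * v.
Proof. rewrite RInt_const. reflexivity. Qed.

Lemma RInt_lec F G a b : a <= b -> Cont F -> Cont G -> (forall p, a < p < b -> F p <= G p) ->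
  RInt F a b <= RInt G a b.
Proof. intros; apply RInt_le; auto; apply exR; auto. Qed.

Lemma cont_cst v : Cont (fun _ => v).
Proof. intro p; apply continuous_const. Qed.

Lemma RInt_lb F a b c d del : Cont F -> a <= c -> c <= d -> d <= b ->
  (forall p, a < p < b -> 0 <= F p) -> (forall p, c < p < d -> del <= F p) ->
  del * (d - c) <= RInt F a b.
Proof.
  intros HF H1 H2 H3 H0 Hd.
  rewrite <- (Chas F a c b), <- (Chas F c d b) by auto.
  assert (0 <= RInt F a c).
  { rewrite <- (Rmult_0_r (c - a)), <- RInt_cst. apply RInt_lec; auto using cont_cst.
    intros; apply H0; lra. }
  assert (0 <= RInt F d b).
  { rewrite <- (Rmult_0_r (b - d)), <- RInt_cst. apply RInt_lec; auto using cont_cst.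
    intros; apply H0; lra. }
  assert (del * (d - c) <= RInt F c d).
  { rewrite Rmult_comm, <- RInt_cst. apply RInt_lec; auto using cont_cst. }
  lra.
Qed.

Lemma RInt_ub F a b c d del : Cont F -> a <= c -> c <= d -> d <= b ->
  (forall p, a < p < b -> F p <= 0) -> (forall p, c < p < d -> F p <= - del) ->
  RInt F a b <= - (del * (d - c)).
Proof.
  intros HF H1 H2 H3 H0 Hd.
  assert (Cont (fun p => 0 - F p)) as HG.
  { intro p. apply (continuous_minus (fun _ => 0) F). apply continuous_const. apply HF. }
  pose proof (RInt_lb (fun p => 0 - F p) a b c d del HG H1 H2 H3) as L.
  rewrite RInt_sub in L by auto using cont_cst. rewrite RInt_cst in L.
  assert (del * (d - c) <= (b - a) * 0 - RInt F a b); [|lra].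
  apply L; intros p Hp; [specialize (H0 p Hp)|specialize (Hd p Hp)]; lra.
Qed.

Lemma cont_der (F : R -> R) : (forall p, ex_derive F p) -> Cont F.
Proof. intros H p; apply (ex_derive_continuous (K:=R_AbsRing) (V:=R_NormedModule)); auto. Qed.

Lemma cont_poly x m : Cont (fun p => p ^ x * (1 - p) ^ m).
Proof. apply cont_der; intros; auto_derive; auto. Qed.
Definition T x m (p : R) := p ^ x * (1 - p) ^ m.
Definition G2 x m (p : R) := p ^ (x + 2) * (1 - p) ^ m.
Definition G1 x m (p : R) := p ^ (x + 1) * (1 - p) ^ m.
Definition H2 x m (p : R) := p ^ (x + 1) * (1 - p) ^ (m + 1).
Definition H1 x m (p : R) := p ^ x * (1 - p) ^ (m + 1).

Lemma G2e x m p : G2 x m p = p * p * T x m p.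
Proof. unfold G2, T; rewrite !pow_add; simpl; ring. Qed.
Lemma G1e x m p : G1 x m p = p * T x m p.
Proof. unfold G1, T; rewrite !pow_add; simpl; ring. Qed.
Lemma H2e x m p : H2 x m p = p * (1 - p) * T x m p.
Proof. unfold H2, T; rewrite !pow_add; simpl; ring. Qed.
Lemma H1e x m p : H1 x m p = (1 - p) * T x m p.
Proof. unfold H1, T; rewrite !pow_add; simpl; ring. Qed.

Lemma cG2 x m : Cont (G2 x m). Proof. apply cont_der; intros; unfold G2; auto_derive; auto. Qed.
Lemma cG1 x m : Cont (G1 x m). Proof. apply cont_der; intros; unfold G1; auto_derive; auto. Qed.
Lemma cH2 x m : Cont (H2 x m). Proof. apply cont_der; intros; unfold H2; auto_derive; auto. Qed.
Lemma cH1 x m : Cont (H1 x m). Proof. apply cont_der; intros; unfold H1; auto_derive; auto. Qed.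

Lemma T_lb x m c d p : 0 <= c -> c <= p -> p <= d -> d <= 1 ->
  c ^ x * (1 - d) ^ m <= T x m p.
Proof.
  intros. unfold T. apply Rmult_le_compat; try (apply pow_le; lra); apply pow_incr; lra.
Qed.
Lemma T_ub x m p : 0 <= p <= 1 -> T x m p <= 1.
Proof.
  intros. unfold T.
  assert (p ^ x <= 1 ^ x) by (apply pow_incr; lra).
  assert ((1 - p) ^ m <= 1 ^ m) by (apply pow_incr; lra).
  rewrite pow1 in *. apply Rle_trans with (1 * 1); [|lra].
  apply Rmult_le_compat; try (apply pow_le; lra); lra.
Qed.
Lemma T_ge0 x m p : 0 <= p <= 1 -> 0 <= T x m p.
Proof. intros. unfold T. apply Rmult_le_pos; apply pow_le; lra. Qed.
Lemma K_pos x m c d : 0 < c -> d < 1 -> 0 < c ^ x * (1 - d) ^ m.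
Proof. intros. apply Rmult_lt_0_compat; apply pow_lt; lra. Qed.

Definition Fa x m a p := G2 x m p / a - G1 x m p.
Definition Ga x m a p := (H2 x m p - a * H1 x m p) / (1 - a).

Lemma cFa x m a : Cont (Fa x m a).
Proof. apply cont_der; intros; unfold Fa, G2, G1; auto_derive; auto. Qed.
Lemma cGa x m a : Cont (Ga x m a).
Proof. apply cont_der; intros; unfold Ga, H2, H1; auto_derive; auto. Qed.

Definition phi x m a :=
  RInt (G2 x m) 0 a / a + RInt (H2 x m) a 1 / (1 - a)
  - a * (RInt (G1 x m) 0 a / a + RInt (H1 x m) a 1 / (1 - a)).

Lemma cmul F c : Cont F -> Cont (fun p => c * F p).
Proof. intros H p. apply (continuous_mult (fun _ => c) F). apply continuous_const. apply H. Qed.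
Lemma cdiv F c : Cont F -> Cont (fun p => F p / c).
Proof. intros H p. apply (continuous_ext (fun p => / c * F p)). intros; unfold Rdiv; apply Rmult_comm.
  apply cmul; auto. Qed.
Lemma csub F G : Cont F -> Cont G -> Cont (fun p => F p - G p).
Proof. intros H1 H2 p. apply (continuous_minus F G); auto. Qed.

Lemma phi_repr x m a : 0 < a < 1 ->
  phi x m a = RInt (Fa x m a) 0 a + RInt (Ga x m a) a 1.
Proof.
  intros Ha. unfold Fa, Ga.
  rewrite RInt_sub by auto using cG2, cG1, cdiv.
  rewrite RInt_divc by auto using cG2.
  rewrite RInt_divc by auto using cH2, cH1, cmul, csub.
  rewrite RInt_sub by auto using cH2, cH1, cmul.
  rewrite RInt_mulc by auto using cH1.
  unfold phi. field. lra.
Qed.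

Lemma Fae x m a p : a <> 0 -> Fa x m a p = p * T x m p * (p - a) * / a.
Proof. intros. unfold Fa. rewrite G2e, G1e. field. auto. Qed.
Lemma Gae x m a p : a <> 1 -> Ga x m a p = (1 - p) * T x m p * (p - a) * / (1 - a).
Proof. intros. unfold Ga. rewrite H2e, H1e. field. lra. Qed.

Lemma phi_decr x m a b : 0 < a -> a < b -> b < 1 -> phi x m b < phi x m a.
Proof.
  intros Ha Hab Hb.
  rewrite !phi_repr by lra.
  rewrite <- (Chas (Fa x m b) 0 a b) by apply cFa.
  rewrite <- (Chas (Ga x m a) a b 1) by apply cGa.
  assert (E1 : RInt (Fa x m b) 0 a <= RInt (Fa x m a) 0 a).
  { apply RInt_lec; [lra|apply cFa|apply cFa|]. intros p Hp.
    rewrite !Fae by lra. assert (0 <= T x m p) by (apply T_ge0; lra).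
    set (t := T x m p) in *. clearbody t.
    assert (E : p * t * (p - a) * / a - p * t * (p - b) * / b = p * p * t * (/ a - / b)) by (field; lra).
    assert (/ b < / a) by (apply Rinv_lt_contravar; nra).
    assert (0 <= p * p * t) by (apply Rmult_le_pos; nra).
    nra. }
  assert (E2 : RInt (Fa x m b) a b <= 0).
  { rewrite <- (Rmult_0_r (b - a)), <- RInt_cst. apply RInt_lec; [lra|apply cFa|apply cont_cst|].
    intros p Hp. rewrite Fae by lra. assert (0 <= T x m p) by (apply T_ge0; lra).
    set (t := T x m p) in *. clearbody t.
    assert (0 < / b) by (apply Rinv_0_lt_compat; lra).
    assert (0 <= p * t) by (apply Rmult_le_pos; lra).
    assert (p * t * (p - b) <= 0) by nra. nra. }
  assert (E3 : RInt (Ga x m b) b 1 <= RInt (Ga x m a) b 1).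
  { apply RInt_lec; [lra|apply cGa|apply cGa|]. intros p Hp.
    rewrite !Gae by lra. assert (0 <= T x m p) by (apply T_ge0; lra).
    set (t := T x m p) in *. clearbody t.
    assert (E : (1 - p) * t * (p - a) * / (1 - a) - (1 - p) * t * (p - b) * / (1 - b)
       = (1 - p) * t * (1 - p) * (b - a) * (/ (1 - a) * / (1 - b))) by (field; lra).
    assert (0 < / (1 - a) * / (1 - b)) by (apply Rmult_lt_0_compat; apply Rinv_0_lt_compat; lra).
    assert (0 <= (1 - p) * t * (1 - p) * (b - a)).
    { repeat apply Rmult_le_pos; lra. }
    assert (0 <= (1 - p) * t * (1 - p) * (b - a) * (/ (1 - a) * / (1 - b))) by (apply Rmult_le_pos; lra).
    lra. }
  set (K := ((a + b) / 2) ^ x * (1 - b) ^ m).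
  assert (HK : 0 < K) by (apply K_pos; lra).
  set (del := (1 - b) * K * ((b - a) / 2) * / (1 - a)).
  assert (Hdel : 0 < del).
  { unfold del. apply Rmult_lt_0_compat; [apply Rmult_lt_0_compat; [apply Rmult_lt_0_compat; lra| lra] | apply Rinv_0_lt_compat; lra]. }
  assert (E4 : del * (b - (a + b) / 2) <= RInt (Ga x m a) a b).
  { apply RInt_lb; [apply cGa|lra|lra|lra| |].
    - intros p Hp. rewrite Gae by lra. assert (0 <= T x m p) by (apply T_ge0; lra).
      set (t := T x m p) in *. clearbody t.
      repeat apply Rmult_le_pos; try lra. left; apply Rinv_0_lt_compat; lra.
    - intros p Hp. rewrite Gae by lra.
      assert (K <= T x m p) by (apply T_lb; lra).
      unfold del. apply Rmult_le_compat_r. left; apply Rinv_0_lt_compat; lra.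
      apply Rmult_le_compat; try lra.
      + apply Rmult_le_pos; lra.
      + apply Rmult_le_compat; lra. }
  assert (0 < del * (b - (a + b) / 2)) by (apply Rmult_lt_0_compat; lra).
  lra.
Qed.

Lemma pt_le1 x m p : 0 <= p <= 1 -> 0 <= p * T x m p <= 1.
Proof.
  intros. assert (0 <= T x m p <= 1) by (split; [apply T_ge0|apply T_ub]; lra).
  split. apply Rmult_le_pos; lra.
  apply Rle_trans with (1 * 1); [apply Rmult_le_compat; lra|lra].
Qed.
Lemma qt_le1 x m p : 0 <= p <= 1 -> 0 <= (1 - p) * T x m p <= 1.
Proof.
  intros. assert (0 <= T x m p <= 1) by (split; [apply T_ge0|apply T_ub]; lra).
  split. apply Rmult_le_pos; lra.
  apply Rle_trans with (1 * 1); [apply Rmult_le_compat; lra|lra].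
Qed.

Lemma phi_lo x m a : 0 < a <= 1/4 ->
  ((1/2) ^ x * (1/4) ^ m) / 64 - a <= phi x m a.
Proof.
  intros Ha. rewrite phi_repr by lra.
  set (K := (1/2) ^ x * (1/4) ^ m).
  assert (E1 : (a - 0) * (-1) <= RInt (Fa x m a) 0 a).
  { rewrite <- RInt_cst. apply RInt_lec; [lra|apply cont_cst|apply cFa|].
    intros p Hp. rewrite Fae by lra.
    pose proof (pt_le1 x m p ltac:(lra)).
    set (u := p * T x m p) in *. clearbody u.
    assert (0 < / a) by (apply Rinv_0_lt_compat; lra).
    assert (-1 <= (p - a) * / a).
    { assert ((p - a) * / a = p * / a - 1) by (field; lra).
      assert (0 <= p * / a) by (apply Rmult_le_pos; lra). lra. }
    assert ((p - a) * / a <= 0) by nra.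
    replace (u * (p - a) * / a) with (u * ((p - a) * / a)) by ring. nra. }
  assert (E2 : (K / 16) * (3/4 - 1/2) <= RInt (Ga x m a) a 1).
  { apply RInt_lb; [apply cGa|lra|lra|lra| |].
    - intros p Hp. rewrite Gae by lra. assert (0 <= T x m p) by (apply T_ge0; lra).
      set (t := T x m p) in *. clearbody t.
      apply Rmult_le_pos; [apply Rmult_le_pos; [apply Rmult_le_pos|]|]; try lra.
      left; apply Rinv_0_lt_compat; lra.
    - intros p Hp. rewrite Gae by lra.
      assert (K <= T x m p) by (unfold K; replace (1/4) with (1 - 3/4) by lra; apply T_lb; lra).
      assert (0 < K) by (unfold K; apply Rmult_lt_0_compat; apply pow_lt; lra).
      set (t := T x m p) in *. clearbody t.
      assert (1 <= / (1 - a)).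
      { rewrite <- Rinv_1. apply Rinv_le_contravar; lra. }
      assert (K / 16 <= (1 - p) * t * (p - a)).
      { apply Rle_trans with ((1/4) * K * (1/4)); [lra|].
        apply Rmult_le_compat; try lra. apply Rmult_le_compat; lra. }
      assert (0 <= (1 - p) * t * (p - a)) by lra.
      nra. }
  lra.
Qed.

Lemma phi_hi x m a : 3/4 <= a < 1 ->
  phi x m a <= (1 - a) - ((1/4) ^ x * (1/2) ^ m) / 48.
Proof.
  intros Ha. rewrite phi_repr by lra.
  set (K := (1/4) ^ x * (1/2) ^ m).
  assert (E1 : RInt (Fa x m a) 0 a <= - ((K / 12) * (1/2 - 1/4))).
  { apply RInt_ub; [apply cFa|lra|lra|lra| |].
    - intros p Hp. rewrite Fae by lra.
      pose proof (pt_le1 x m p ltac:(lra)).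
      set (u := p * T x m p) in *. clearbody u.
      assert (0 < / a) by (apply Rinv_0_lt_compat; lra).
      assert ((p - a) * / a <= 0) by nra.
      replace (u * (p - a) * / a) with (u * ((p - a) * / a)) by ring. nra.
    - intros p Hp. rewrite Fae by lra.
      assert (K <= T x m p) by (unfold K; replace (1/2) with (1 - 1/2) by lra; apply T_lb; lra).
      assert (0 < K) by (unfold K; apply Rmult_lt_0_compat; apply pow_lt; lra).
      set (t := T x m p) in *. clearbody t.
      assert (0 < / a) by (apply Rinv_0_lt_compat; lra).
      assert ((p - a) * / a <= - (1/3)).
      { assert ((p - a) * / a = p * / a - 1) by (field; lra).
        assert (p * / a <= 2/3).
        { apply Rmult_le_reg_r with a; [lra|]. replace (p * / a * a) with p by (field; lra). lra. }
        lra. }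
      assert (K / 4 <= p * t).
      { apply Rle_trans with ((1/4) * K); [lra|]. apply Rmult_le_compat; lra. }
      replace (p * t * (p - a) * / a) with ((p * t) * ((p - a) * / a)) by ring.
      nra. }
  assert (E2 : RInt (Ga x m a) a 1 <= (1 - a) * 1).
  { rewrite <- RInt_cst. apply RInt_lec; [lra|apply cGa|apply cont_cst|].
    intros p Hp. rewrite Gae by lra.
    pose proof (qt_le1 x m p ltac:(lra)).
    set (u := (1 - p) * T x m p) in *. clearbody u.
    assert (0 <= (p - a) * / (1 - a) <= 1).
    { assert (0 < / (1 - a)) by (apply Rinv_0_lt_compat; lra). split. nra.
      apply Rmult_le_reg_r with (1 - a); [lra|]. replace ((p - a) * / (1 - a) * (1 - a)) with (p - a) by (field; lra). lra. }
    replace (u * (p - a) * / (1 - a)) with (u * ((p - a) * / (1 - a))) by ring. nra. }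
  lra.
Qed.

Lemma cpt0 F a : Cont F -> continuity_pt (fun z => RInt F 0 z) a.
Proof. intro HF. apply continuity_pt_filterlim.
  apply (continuous_RInt_1 F 0 a (fun z => RInt F 0 z)). apply filter_forall. intro z.
  apply (RInt_correct (V:=R_CompleteNormedModule)). apply exR; auto. Qed.
Lemma cpt1 F a : Cont F -> continuity_pt (fun z => RInt F z 1) a.
Proof. intro HF. apply continuity_pt_filterlim.
  apply (continuous_RInt_2 F a 1 (fun z => RInt F z 1)). apply filter_forall. intro z.
  apply (RInt_correct (V:=R_CompleteNormedModule)). apply exR; auto. Qed.

Lemma cpt_phi x m a : 0 < a < 1 -> continuity_pt (phi x m) a.
Proof.
  intros Ha. unfold phi.
  assert (D1 : continuity_pt (fun z => z) a) by apply continuity_pt_id.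
  assert (D2 : continuity_pt (fun z => 1 - z) a).
  { apply (continuity_pt_minus (fun _ => 1) (fun z => z)). apply continuity_pt_const; intros u v; auto. auto. }
  apply (continuity_pt_minus (fun a => _ + _) (fun a => _ * _)).
  - apply (continuity_pt_plus (fun a => _ / _) (fun a => _ / _)).
    + apply (continuity_pt_div (fun z => RInt (G2 x m) 0 z) (fun z => z)); auto using cpt0, cG2. lra.
    + apply (continuity_pt_div (fun z => RInt (H2 x m) z 1) (fun z => 1 - z)); auto using cpt1, cH2. lra.
  - apply (continuity_pt_mult (fun z => z) (fun a => _ + _)); auto.
    apply (continuity_pt_plus (fun a => _ / _) (fun a => _ / _)).
    + apply (continuity_pt_div (fun z => RInt (G1 x m) 0 z) (fun z => z)); auto using cpt0, cG1. lra.
    + apply (continuity_pt_div (fun z => RInt (H1 x m) z 1) (fun z => 1 - z)); auto using cpt1, cH1. lra.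
Qed.

Lemma Kle1 x m c e : 0 <= c <= 1 -> 0 <= e <= 1 -> 0 <= c ^ x * e ^ m <= 1.
Proof.
  intros. assert (c ^ x <= 1 ^ x) by (apply pow_incr; lra).
  assert (e ^ m <= 1 ^ m) by (apply pow_incr; lra). rewrite pow1 in *.
  assert (0 <= c ^ x) by (apply pow_le; lra). assert (0 <= e ^ m) by (apply pow_le; lra).
  split. apply Rmult_le_pos; auto.
  apply Rle_trans with (1 * 1); [apply Rmult_le_compat; lra|lra].
Qed.

Lemma den_pos x m a : 0 < a < 1 ->
  0 < RInt (G1 x m) 0 a / a + RInt (H1 x m) a 1 / (1 - a).
Proof.
  intros Ha.
  set (K := (a / 2) ^ x * (1 - a) ^ m).
  assert (0 < K) by (unfold K; apply K_pos; lra).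
  assert (E1 : ((a / 2) * K) * (a - a / 2) <= RInt (G1 x m) 0 a).
  { apply RInt_lb; [apply cG1|lra|lra|lra| |]; intros p Hp; rewrite G1e.
    - apply Rmult_le_pos; [lra|apply T_ge0; lra].
    - apply Rmult_le_compat; try lra. apply T_lb; lra. }
  assert (E2 : 0 * (a - a) <= RInt (H1 x m) a 1).
  { apply RInt_lb; [apply cH1|lra|lra|lra| |]; intros p Hp; rewrite H1e.
    - apply Rmult_le_pos; [lra|apply T_ge0; lra].
    - lra. }
  assert (0 < (a / 2) * K * (a - a / 2)) by (apply Rmult_lt_0_compat; [apply Rmult_lt_0_compat|]; lra).
  assert (0 < RInt (G1 x m) 0 a / a) by (apply Rdiv_lt_0_compat; lra).
  assert (0 <= RInt (H1 x m) a 1 / (1 - a)) by (apply Rmult_le_pos; [lra| left; apply Rinv_0_lt_compat; lra]).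
  lra.
Qed.

Lemma pm_phi n x a : 0 < a < 1 -> (post_mean n x a = a <-> phi x (n - x) a = 0).
Proof.
  intros Ha. pose proof (den_pos x (n - x) a Ha) as HD.
  unfold post_mean, phi.
  change (fun p => p ^ (x + 2) * (1 - p) ^ (n - x)) with (G2 x (n - x)).
  change (fun p => p ^ (x + 1) * (1 - p) ^ (n - x + 1)) with (H2 x (n - x)).
  change (fun p => p ^ (x + 1) * (1 - p) ^ (n - x)) with (G1 x (n - x)).
  change (fun p => p ^ x * (1 - p) ^ (n - x + 1)) with (H1 x (n - x)).
  set (m := (n - x)%nat) in *.
  set (P2 := RInt (G2 x m) 0 a) in *. set (Q2 := RInt (H2 x m) a 1) in *.
  set (P1 := RInt (G1 x m) 0 a) in *. set (Q1 := RInt (H1 x m) a 1) in *.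
  set (D := P1 / a + Q1 / (1 - a)) in *.
  assert (E : (2 / a * P2 + 2 / (1 - a) * Q2) / (2 / a * P1 + 2 / (1 - a) * Q1)
           = (P2 / a + Q2 / (1 - a)) / D).
  { assert (E1 : 2 / a * P1 + 2 / (1 - a) * Q1 = 2 * D) by (unfold D; field; lra).
    assert (E2 : 2 / a * P2 + 2 / (1 - a) * Q2 = 2 * (P2 / a + Q2 / (1 - a))) by (field; lra).
    rewrite E1, E2. field. lra. }
  rewrite E. split; intro H.
  - rewrite <- H at 3. field. lra.
  - assert (P2 / a + Q2 / (1 - a) = a * D) by lra. rewrite H0. field. lra.
Qed.

Theorem theorem2 (n x : nat) (hn : (1 <= n)%nat) (hx : (x <= n)%nat) :
  exists! tau : R, (0 < tau < 1) /\ post_mean n x tau = tau.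
Proof.
  set (m := (n - x)%nat).
  set (K1 := (1/2) ^ x * (1/4) ^ m).
  set (K2 := (1/4) ^ x * (1/2) ^ m).
  assert (HK1 : 0 < K1) by (unfold K1; apply Rmult_lt_0_compat; apply pow_lt; lra).
  assert (HK2 : 0 < K2) by (unfold K2; apply Rmult_lt_0_compat; apply pow_lt; lra).
  assert (K1 <= 1) by (unfold K1; apply Kle1; lra).
  assert (K2 <= 1) by (unfold K2; apply Kle1; lra).
  set (a0 := K1 / 128). set (a1 := 1 - K2 / 96).
  assert (L0 : 0 < phi x m a0).
  { pose proof (phi_lo x m a0 ltac:(unfold a0; lra)) as HH. fold K1 in HH. unfold a0 in *. lra. }
  assert (L1 : phi x m a1 < 0).
  { pose proof (phi_hi x m a1 ltac:(unfold a1; lra)) as HH. fold K2 in HH. unfold a1 in *. lra. }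
  destruct (IVT_interv (fun a => - phi x m a) a0 a1) as [tau [Ht Hz]].
  - intros a Ha. apply (continuity_pt_opp (phi x m)). apply cpt_phi. unfold a0, a1 in *; lra.
  - unfold a0, a1; lra.
  - lra.
  - lra.
  - assert (Htau : 0 < tau < 1) by (unfold a0, a1 in *; lra).
    exists tau. split.
    + split; auto. apply pm_phi; auto. fold m. lra.
    + intros y [Hy Hpy]. apply pm_phi in Hpy; auto. fold m in Hpy.
      destruct (Rtotal_order tau y) as [Hl|[He|Hg]]; auto.
      * pose proof (phi_decr x m tau y ltac:(lra) Hl ltac:(lra)). lra.
      * pose proof (phi_decr x m y tau ltac:(lra) Hg ltac:(lra)). lra.
Qed.
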